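(* Fix any $\epsilon>0$. There exists a measurable set $S_\epsilon\subset\mathbb{T}^2$ with $\mu(S_\epsilon)\ge 9/32-\epsilon$ such that the following holds. For any $\theta,\alpha\in\mathbb{T}^2$ with $\{\theta,\theta+\alpha,\theta+2\alpha\}\subset S_\epsilon$, either \[2\psi(\theta+\alpha)\ge \psi(\theta)+\psi(\theta+2\alpha)+1/2,\] or otherwise, writing $d:=\frac{\pi^{-1}(\theta+2\alpha)-\pi^{-1}(\theta)}{2}\in\mathbb{R}^2$ (so that $\psi(\theta+2\alpha)=\psi(\theta)+2(d_1+d_2)$), we have \[\psi(\theta+\alpha)=\psi(\theta)+(d_1+d_2),\] and furthermore, if $|d_1+d_2|\le \frac{\epsilon}{1000}$, then \[(1-\{p(\theta)\})^2+(1-\{p(\theta+2\alpha)\})^2-2(1-\{p(\theta+\alpha)\})^2\ge d_1^2.\]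
   Context: $\mathbb{T}^2:=(\mathbb{R}/\mathbb{Z})^2$ with normalized Haar (Lebesgue) measure $\mu$. $\pi:\mathbb{R}^2\to\mathbb{T}^2$, $x\mapsto x+\mathbb{Z}^2$, and for $\theta\in\mathbb{T}^2$, $\pi^{-1}(\theta)$ denotes the unique $x\in[0,1)^2$ with $\pi(x)=\theta$. The sum map $\psi:\mathbb{T}^2\to[0,2)$ is $\psi(\theta)=\pi^{-1}(\theta)_1+\pi^{-1}(\theta)_2$. The projection $p:\mathbb{T}^2\to[0,1)$ is $p(\theta)=\pi^{-1}(\theta)_1$. For $x\in[0,1)$, $\{x\}:=x$ if $x\in[0,1/2)$ and $\{x\}:=x-1/2$ otherwise (this is not the usual fractional part). *)

(* Defs.v *)
From HB Require Import structures.
From mathcomp Require Import all_boot all_order all_algebra.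
From mathcomp Require Import all_classical all_reals all_analysis.
Set Implicit Arguments. Unset Strict Implicit. Unset Printing Implicit Defensive.
Import Order.TTheory GRing.Theory Num.Theory.
Local Open Scope classical_set_scope.
Local Open Scope ring_scope.

(* The torus T^2 = (R/Z)^2 is represented by points of R^2; a point x : R*R
   stands for its class pi(x).  [tor x] is the unique representative of pi(x)
   in [0,1)^2, i.e. pi^{-1}(pi(x)). *)
Definition frac {R : realType} (x : R) : R := x - (Num.floor x)%:~R.

Definition tor {R : realType} (x : R * R) : R * R := (frac x.1, frac x.2).

Definition unit_sq {R : realType} : set (R * R) :=
  [set x | 0 <= x.1 < 1 /\ 0 <= x.2 < 1].

Definition tadd {R : realType} (x y : R * R) : R * R := (x.1 + y.1, x.2 + y.2).
Definition tscale {R : realType} (n : nat) (x : R * R) : R * R := (x.1 *+ n, x.2 *+ n).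

Definition psi {R : realType} (t : R * R) : R := (tor t).1 + (tor t).2.
Definition proj1T {R : realType} (t : R * R) : R := (tor t).1.

(* the non-standard {x} on [0,1) *)
Definition brace {R : realType} (x : R) : R := if x < 1/2 then x else x - 1/2.

(* normalized Haar measure on T^2 = Lebesgue measure on [0,1)^2 *)
Definition mu2 {R : realType} : set (R * R) -> \bar R :=
  (@lebesgue_measure R \x @lebesgue_measure R)%E.

(* Main.v *)
Require Import Defs.
From HB Require Import structures.
From mathcomp Require Import all_boot all_order all_algebra.
From mathcomp Require Import all_classical all_reals all_analysis.
From mathcomp Require Import lra zify.
Import Order.TTheory GRing.Theory Num.Theory.
Local Open Scope classical_set_scope.
Local Open Scope ring_scope.

Definition inS {R : realType} (dl x y : R) : bool :=
  [|| [&& 1/2 <= x, x < 3/4, 1/4 <= y & y < 3/4],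
      [&& 3/4 <= x, x < 1, 1 <= x + y & x + y < 3/2] |
      [&& 0 <= x, 3/4 <= y, y < 1 & x + y < 1 - dl]].
Definition inB {R : realType} (x y : R) : bool :=
  [|| [&& 1/2 <= x, x < 3/4, 1/4 <= y & y < 3/4] |
      [&& 3/4 <= x, x < 1, 1 <= x + y & x + y < 3/2]].
Definition inT {R : realType} (dl x y : R) : bool :=
  [&& 0 <= x, 3/4 <= y, y < 1 & x + y < 1 - dl].

Lemma inS_E {R : realType} (dl x y : R) : inS dl x y = inB x y || inT dl x y.
Proof. by rewrite /inS /inB /inT orbA. Qed.

Lemma inS_bounds {R : realType} (dl x y : R) : 0 < dl -> inS dl x y ->
  [/\ 0 <= x, x < 1, 0 <= y & y < 1].
Proof.
move=> d0; case/or3P=> /and4P[*]; split; lra.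
Qed.

Lemma int_small (R : realType) (z : int) : -2 < (z%:~R : R) < 2 ->
  (z%:~R : R) = -1 \/ (z%:~R : R) = 0 \/ (z%:~R : R) = 1.
Proof.
case/andP => h1 h2.
have h1' : (-2 < z)%R by rewrite -(ltr_int R) rmorphN /=.
have h2' : (z < 2)%R by rewrite -(ltr_int R).
have : z = -1 \/ z = 0 \/ z = 1 by lia.
by case=> [->|[->|->]]; [left; rewrite rmorphN /= | right; left | right; right].
Qed.
Lemma core_k (R : realType) (dl a0 b0 a1 b1 a2 b2 k1 k2 : R) :
  0 < dl -> inS dl a0 b0 -> inS dl a1 b1 -> inS dl a2 b2 ->
  a0 + a2 - 2 * a1 = k1 -> b0 + b2 - 2 * b1 = k2 ->
  (k1 = -1 \/ k1 = 0 \/ k1 = 1) -> (k2 = -1 \/ k2 = 0 \/ k2 = 1) ->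
  k1 + k2 <= 0.
Proof.
move=> hd H0 H1 H2 e1 e2 [?|[?|?]] [?|[?|?]]; subst k1 k2; try lra;
move: H0 H1 H2;
case/or3P=> [/and4P[? ? ? ?]|/and4P[? ? ? ?]|/and4P[? ? ? ?]];
case/or3P=> [/and4P[? ? ? ?]|/and4P[? ? ? ?]|/and4P[? ? ? ?]];
case/or3P=> [/and4P[? ? ? ?]|/and4P[? ? ? ?]|/and4P[? ? ? ?]]; lra.
Qed.

Lemma br_lo {R : realType} (x : R) : x < 1/2 -> brace x = x.
Proof. by rewrite /brace => ->. Qed.
Lemma br_hi {R : realType} (x : R) : 1/2 <= x -> brace x = x - 1/2.
Proof. by rewrite /brace ltNge => ->. Qed.

Ltac brs x := first [rewrite (br_lo x); last lra | rewrite (br_hi x); last lra].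

Lemma core_b (R : realType) (dl a0 b0 a1 b1 a2 b2 k1 k2 : R) :
  0 < dl -> inS dl a0 b0 -> inS dl a1 b1 -> inS dl a2 b2 ->
  a0 + a2 - 2 * a1 = k1 -> b0 + b2 - 2 * b1 = k2 ->
  (k1 = -1 \/ k1 = 0 \/ k1 = 1) -> (k2 = -1 \/ k2 = 0 \/ k2 = 1) ->
  k1 + k2 = 0 -> (a2 + b2) - (a0 + b0) <= dl -> (a0 + b0) - (a2 + b2) <= dl ->
  (1 - brace a0) ^+ 2 + (1 - brace a2) ^+ 2 - 2 * (1 - brace a1) ^+ 2 >= ((a2 - a0) / 2) ^+ 2.
Proof.
move=> hd H0 H1 H2 e1 e2 [?|[?|?]] [?|[?|?]] hk w1 w2; subst k1 k2; try lra;
move: H0 H1 H2;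
case/or3P=> [/and4P[? ? ? ?]|/and4P[? ? ? ?]|/and4P[? ? ? ?]];
case/or3P=> [/and4P[? ? ? ?]|/and4P[? ? ? ?]|/and4P[? ? ? ?]];
case/or3P=> [/and4P[? ? ? ?]|/and4P[? ? ? ?]|/and4P[? ? ? ?]];
(try lra);
brs a0; brs a1; brs a2; have h := sqr_ge0 (a2 - a0); nra.
Qed.

Lemma main_real (R : realType) (eps a0 b0 a1 b1 a2 b2 : R) (z1 z2 : int) : 0 < eps ->
  inS (eps/400) a0 b0 -> inS (eps/400) a1 b1 -> inS (eps/400) a2 b2 ->
  a0 + a2 - 2 * a1 = z1%:~R -> b0 + b2 - 2 * b1 = z2%:~R ->
  (2 * (a1 + b1) >= (a0 + b0) + (a2 + b2) + 1/2) \/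
  ((a1 + b1) = (a0 + b0) + ((a2 - a0)/2 + (b2 - b0)/2) /\
   (`|(a2 - a0)/2 + (b2 - b0)/2| <= eps/1000 ->
    (1 - brace a0) ^+ 2 + (1 - brace a2) ^+ 2 - 2 * (1 - brace a1) ^+ 2 >= ((a2 - a0)/2) ^+ 2)).
Proof.
move=> e0 H0 H1 H2 e1 e2.
have d0 : 0 < eps / 400 by lra.
have [? ? ? ?] := inS_bounds _ _ _ d0 H0.
have [? ? ? ?] := inS_bounds _ _ _ d0 H1.
have [? ? ? ?] := inS_bounds _ _ _ d0 H2.
have k1s : (z1%:~R : R) = -1 \/ (z1%:~R : R) = 0 \/ (z1%:~R : R) = 1.
  by apply: int_small; apply/andP; split; lra.
have k2s : (z2%:~R : R) = -1 \/ (z2%:~R : R) = 0 \/ (z2%:~R : R) = 1.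
  by apply: int_small; apply/andP; split; lra.
have Kle := @core_k R (eps/400) a0 b0 a1 b1 a2 b2 _ _ d0 H0 H1 H2 e1 e2 k1s k2s.
have Kb := @core_b R (eps/400) a0 b0 a1 b1 a2 b2 _ _ d0 H0 H1 H2 e1 e2 k1s k2s.
move: Kle Kb e1 e2.
case: k1s => [->|[->|->]]; case: k2s => [->|[->|->]]; move=> Kle Kb e1 e2;
  first [ lra | left; lra |
    right; split; [lra | rewrite ler_norml => /andP[w1 w2]; apply: Kb; lra]].
Qed.
Module FTCaux.
Import numFieldNormedType.Exports.
Lemma int_lin (R : realType) (a : R) : 0 < a ->
  (\int[@lebesgue_measure R]_(x in `[0%R, a]) ((a - x)%:E) = ((a ^+ 2) / 2)%:E)%E.
Proof.
move=> a0.
pose p : {poly R} := a *: 'X - (2^-1) *: 'X^2.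
have pE x : p.[x] = a * x - x ^+ 2 / 2.
  by rewrite /p !hornerE /=; lra.
rewrite (@continuous_FTC2 _ (fun x => a - x) (horner p) 0 a a0).
- by rewrite !pE; congr (_%:E); lra.
- have hc : continuous (fun x : R => a - x) by move=> x; apply: continuousB; [exact: cst_continuous | exact: cvg_id].
  have := @continuous_subspaceT _ _ [set` `[0, a]] _ hc. exact.
  
- split.
  + by move=> x _; exact: derivable_horner.
  + by apply: cvg_at_right_filter; exact: continuous_horner.
  + by apply: cvg_at_left_filter; exact: continuous_horner.
- move=> x _; rewrite derive1E derive_val /p. rewrite derivB !derivZ derivX derivXn !hornerE /=. lra.
Qed.

End FTCaux.

Section M.
Variable R : realType.
Ltac mes := repeat first [ apply: measurable_or | apply: measurable_and | apply: measurable_realfun.measurable_fun_ler | apply: measurable_realfun.measurable_fun_ltr | apply: measurable_realfun.measurable_funD | exact: measurable_cst | exact: measurable_fst | exact: measurable_snd ].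

Lemma mB : measurable [set p : R * R | inB p.1 p.2].
Proof.
have hf : measurable_fun [set: R * R] (fun p : R * R => inB p.1 p.2).
  rewrite /inB; mes.
by rewrite -[X in measurable X]setTI; apply: hf.
Qed.
Lemma mT (dl : R) : measurable [set p : R * R | inT dl p.1 p.2].
Proof.
have hf : measurable_fun [set: R * R] (fun p : R * R => inT dl p.1 p.2).
  rewrite /inT; mes.
by rewrite -[X in measurable X]setTI; apply: hf.
Qed.
Lemma mS (dl : R) : measurable [set p : R * R | inS dl p.1 p.2].
Proof.
have hf : measurable_fun [set: R * R] (fun p : R * R => inS dl p.1 p.2).
  rewrite /inS; mes.
by rewrite -[X in measurable X]setTI; apply: hf.
Qed.


Lemma muB : mu2 [set p : R * R | inB p.1 p.2] = (1/4 : R)%:E.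
Proof.
rewrite /mu2 /product_measure1 /=.
transitivity (\int[lebesgue_measure]_(x in `[(1/2 : R)%R, 1%R[%classic) (cst ((1/2 : R)%R)%:E) x)%E.
  rewrite [RHS]integral_mkcond; apply: eq_integral => x _ /=.
  rewrite patchE.
  case: ifPn => [|/negP]; rewrite inE /= in_itv /= => hx.
  - have [h1|h1] := ltP x (3/4).
    + rewrite (_ : xsection _ _ = [set` `[1/4, 3/4[]) ?lebesgue_measure_itv /= ?lte_fin.
        by rewrite ifT; [rewrite -EFinD; congr (_%:E); lra | lra].
      apply/seteqP; split => y; rewrite /xsection /= in_itv /= inE /inB /=.
        case/orP => /and4P[*]; apply/andP; lra.
      by case/andP => *; apply/orP; left; apply/and4P; split; lra.
    + rewrite (_ : xsection _ _ = [set` `[1 - x, 3/2 - x[]) ?lebesgue_measure_itv /= ?lte_fin.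
        by rewrite ifT; [rewrite -EFinD; congr (_%:E); lra | lra].
      apply/seteqP; split => y; rewrite /xsection /= in_itv /= inE /inB /=.
        case/orP => /and4P[*]; apply/andP; lra.
      by case/andP => *; apply/orP; right; apply/and4P; split; lra.
  - rewrite (_ : xsection _ _ = set0) ?measure0 //.
    apply/seteqP; split => y; rewrite /xsection /= inE /inB /= //.
    by case/orP => /and4P[*]; apply: hx; apply/andP; lra.
rewrite integral_cst //= lebesgue_measure_itv /= lte_fin.
by rewrite ifT; [rewrite -EFinD -EFinM; congr (_%:E); lra | lra].
Qed.

Lemma muT (dl : R) : 0 < dl -> dl < 1/4 ->
  mu2 [set p : R * R | inT dl p.1 p.2] = (((1/4 - dl) ^+ 2) / 2)%:E.
Proof.
move=> d0 d1.
rewrite /mu2 /product_measure1 /= -FTCaux.int_lin; last lra.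
rewrite [RHS]integral_mkcond; apply: eq_integral => x _ /=; rewrite patchE.
case: ifPn => [|/negP]; rewrite inE /= in_itv /= => hx.
- rewrite (_ : xsection _ _ = [set` `[3/4, 1 - dl - x[]) ?lebesgue_measure_itv /= ?lte_fin.
    case: ifPn => h; first by rewrite -EFinD; congr (_%:E); lra.
    by rewrite -leNgt in h; congr (_%:E); lra.
  apply/seteqP; split => y; rewrite /xsection /= in_itv /= inE /inT /=.
    by case/and4P => *; apply/andP; lra.
  by case/andP => *; apply/and4P; split; lra.
- rewrite (_ : xsection _ _ = set0) ?measure0 //.
  apply/seteqP; split => y; rewrite /xsection /= inE /inT /= //.
  by case/and4P => *; apply: hx; apply/andP; lra.
Qed.
End M.

Theorem proposition3p3 (R : realType) (eps : R) (heps : 0 < eps) :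
  exists S : set (R * R),
    measurable S /\ S `<=` unit_sq /\
    ((9 / 32 - eps)%:E <= mu2 S)%E /\
    forall theta alpha : R * R,
      S (tor theta) -> S (tor (tadd theta alpha)) ->
      S (tor (tadd theta (tscale 2 alpha))) ->
      let t0 := theta in
      let t1 := tadd theta alpha in
      let t2 := tadd theta (tscale 2 alpha) in
      let d1 := ((tor t2).1 - (tor t0).1) / 2 in
      let d2 := ((tor t2).2 - (tor t0).2) / 2 in
      (2 * psi t1 >= psi t0 + psi t2 + 1 / 2) \/
      (psi t1 = psi t0 + (d1 + d2) /\
       (`|d1 + d2| <= eps / 1000 ->
        (1 - brace (proj1T t0)) ^+ 2 + (1 - brace (proj1T t2)) ^+ 2
          - 2 * (1 - brace (proj1T t1)) ^+ 2 >= d1 ^+ 2)).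
Proof.
pose dl := eps / 400.
have d0 : 0 < dl by rewrite /dl; lra.
exists [set p : R * R | inS dl p.1 p.2].
split; first exact: mS.
split.
  move=> p /= /(inS_bounds _ _ _ d0) [? ? ? ?]; rewrite /unit_sq /=; split; apply/andP; split => //.
split.
  have -> : [set p : R * R | inS dl p.1 p.2] =
      [set p : R * R | inB p.1 p.2] `|` [set p : R * R | inT dl p.1 p.2].
    apply/seteqP; split => p /=; rewrite inS_E.
      by case/orP; [left | right].
    by case => ->; rewrite ?orbT.
  rewrite /mu2 measureU; last 3 first.
  - exact: mB.
  - exact: mT.
  - apply/seteqP; split => p //= [hb ht].
    by case/orP: hb => /and4P[*]; case/and4P: ht => *; lra.
  rewrite [X in (_ <= X + _)%E](_ : _ = (1/4 : R)%:E); last exact: muB.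
  have [el|eg] := ltP eps (1/32).
    rewrite [X in (_ <= _ + X)%E](_ : _ = (((1/4 - dl) ^+ 2) / 2 : R)%:E); last first.
      by apply: muT; rewrite /dl; lra.
    rewrite -EFinD lee_fin /dl; nra.
  apply: (le_trans _ (leeDl _ _)); last exact: measure_ge0.
  by rewrite lee_fin; lra.
move=> theta alpha H0 H1 H2; cbv zeta.
rewrite /psi /proj1T /tor /tadd /tscale /frac /= in H0 H1 H2 *.
apply: (@main_real R eps _ _ _ _ _ _
  (Num.floor (theta.1 + alpha.1) *+ 2 - Num.floor theta.1 - Num.floor (theta.1 + alpha.1 *+ 2))
  (Num.floor (theta.2 + alpha.2) *+ 2 - Num.floor theta.2 - Num.floor (theta.2 + alpha.2 *+ 2))
  heps H0 H1 H2).
  rewrite /Defs.frac !rmorphB /= rmorphMn /= !mulr2n; lra.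
rewrite /Defs.frac !rmorphB /= rmorphMn /= !mulr2n; lra.
Qed.
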